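(* If the alphabet $\mathcal{A}\subset\mathbb{N}$ contains two consecutive positive integers $m$ and $m+1$, then the semigroup $\Gamma_{\mathcal{A}}$ has everywhere strong approximation.
   Context: For $a\in\mathbb{N}$ let $\gamma_a=\begin{pmatrix}0&1\\1&a\end{pmatrix}$. $\Gamma_{\mathcal{A}}\subset\mathrm{SL}_2(\mathbb{Z})$ is the semigroup generated by the products $\gamma_a\gamma_{a'}$, $a,a'\in\mathcal{A}$. $\Gamma_{\mathcal{A}}$ has everywhere strong approximation if for every $q\in\mathbb{N}$ the reduction of $\Gamma_{\mathcal{A}}$ modulo $q$ equals $\mathrm{SL}_2(\mathbb{Z}/q\mathbb{Z})$. *)

(* Defs.v *)
From HB Require Import structures.
From mathcomp Require Import all_boot all_order all_algebra.
Set Implicit Arguments. Unset Strict Implicit. Unset Printing Implicit Defensive.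
Import Order.TTheory GRing.Theory Num.Theory.
Local Open Scope ring_scope.

Definition gamma (a : nat) : 'M[int]_2 :=
  \matrix_(i < 2, j < 2)
    if ((i : nat) == 0%N) && ((j : nat) == 0%N) then 0
    else if ((i : nat) == 1%N) && ((j : nat) == 1%N) then (a%:Z)
    else 1.

Inductive in_Gamma (A : nat -> Prop) : 'M[int]_2 -> Prop :=
  | in_Gamma_gen a a' : A a -> A a' -> in_Gamma A (gamma a *m gamma a')
  | in_Gamma_mul g h : in_Gamma A g -> in_Gamma A h -> in_Gamma A (g *m h).

(* reduction of an integer matrix modulo q (meaningful for q >= 2) *)
Definition reduce_mod (q : nat) (g : 'M[int]_2) : 'M['Z_q]_2 :=
  map_mx (fun z : int => z%:~R) g.

(* For q = 1, SL_2(Z/1Z) is the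
   trivial group and the condition is vacuous (Gamma_A nonempty), and 'Z_1
   is not Z/1Z in MathComp, so we quantify over q >= 2. *)
Definition everywhere_strong_approximation (A : nat -> Prop) : Prop :=
  forall q : nat, (1 < q)%N ->
    forall M : 'M['Z_q]_2,
      (exists g, in_Gamma A g /\ reduce_mod q g = M) <-> \det M = 1.

(* Main.v *)
Require Import Defs.
From mathcomp Require Import all_boot all_order all_algebra.
From mathcomp Require Import all_fingroup ring zify.
Import GRing.Theory.
Local Open Scope ring_scope.
Set Implicit Arguments. Unset Strict Implicit. Unset Printing Implicit Defensive.

Section M22.
Variable R : comNzRingType.
Definition m22 (a b c d : R) : 'M[R]_2 :=
  \matrix_(i < 2, j < 2) if (i : nat) == 0%N then (if (j:nat) == 0%N then a else b)
                         else (if (j:nat) == 0%N then c else d).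
Lemma m22_eta (M : 'M[R]_2) : M = m22 (M 0 0) (M 0 1) (M 1 0) (M 1 1).
Proof.
apply/matrixP => i j; rewrite !mxE.
by case: i => [[|[|i]] Hi] //; case: j => [[|[|j]] Hj] //=; congr (M _ _); apply/val_inj.
Qed.
Lemma m22_mul a b c d a' b' c' d' :
  m22 a b c d * m22 a' b' c' d' =
  m22 (a*a' + b*c') (a*b' + b*d') (c*a'+d*c') (c*b'+d*d').
Proof.
rewrite -mulmxE.
apply/matrixP => i j; rewrite !mxE !big_ord_recr big_ord0 /= add0r !mxE.
by case: i => [[|[|i]] Hi] //; case: j => [[|[|j]] Hj].
Qed.
Lemma det_m22 a b c d : \det (m22 a b c d) = a * d - b * c.
Proof.
rewrite (expand_det_row _ 0) !big_ord_recr big_ord0 /= add0r.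
rewrite /cofactor !det_mx11 !mxE /=.
by rewrite expr0 expr1 !mul1r mulN1r mulrN.
Qed.
Lemma m22_1 : (1 : 'M[R]_2) = m22 1 0 0 1.
Proof.
apply/matrixP => i j; rewrite !mxE.
by case: i => [[|[|i]] Hi] //; case: j => [[|[|j]] Hj].
Qed.
Lemma m22_00 a b c d : m22 a b c d 0 0 = a. Proof. by rewrite mxE. Qed.
Lemma m22_10 a b c d : m22 a b c d 1 0 = c. Proof. by rewrite mxE. Qed.
End M22.

Lemma gamma_m22 a : gamma a = m22 0 1 1 a%:Z.
Proof.
apply/matrixP => i j; rewrite !mxE.
by case: i => [[|[|i]] Hi] //; case: j => [[|[|j]] Hj].
Qed.

Lemma reduce_mul q (g h : 'M[int]_2) :
  reduce_mod q (g *m h) = reduce_mod q g *m reduce_mod q h.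
Proof. by rewrite /reduce_mod map_mxM. Qed.

Lemma reduce_gamma q a : reduce_mod q (gamma a) = m22 0 1 1 (a%:R : 'Z_q).
Proof.
rewrite gamma_m22; apply/matrixP => i j; rewrite !mxE.
by case: i => [[|[|i]] Hi] //; case: j => [[|[|j]] Hj].
Qed.

Section Main.
Variables (A : nat -> Prop) (m q : nat).
Hypotheses (Am : A m) (Am1 : A m.+1) (q1 : (1 < q)%N).

Definition S (M : 'M['Z_q]_2) := exists g, in_Gamma A g /\ reduce_mod q g = M.

Let gq a : 'M['Z_q]_2 := m22 0 1 1 (a%:R : 'Z_q).

Lemma det_gq a : \det (gq a) = -1.
Proof. by rewrite /gq det_m22; ring. Qed.

Lemma S_det M : S M -> \det M = 1.
Proof.
move=> [g [Hg <-]]; elim: Hg => [a a' _ _|g' h _ IH1 _ IH2].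
  by rewrite reduce_mul !reduce_gamma det_mulmx !det_gq; ring.
by rewrite reduce_mul det_mulmx IH1 IH2 mulr1.
Qed.

Lemma S_mul x y : S x -> S y -> S (x * y).
Proof.
move=> [g [Hg <-]] [h [Hh <-]]; exists (g *m h); split.
  exact: in_Gamma_mul.
by rewrite reduce_mul mulmxE.
Qed.

Lemma S_gen a b : A a -> A b -> S (gq a * gq b).
Proof.
move=> Ha Hb; exists (gamma a *m gamma b); split; first exact: in_Gamma_gen.
by rewrite reduce_mul !reduce_gamma mulmxE.
Qed.

Lemma S_pow x n : S x -> S (x ^+ n.+1).
Proof.
move=> Sx; elim: n => [|n IH]; first by rewrite expr1.
by rewrite exprS; apply: S_mul.
Qed.

Lemma unit_det1 (x : 'M['Z_q]_2) : \det x = 1 -> x \is a GRing.unit.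
Proof. by move=> H; rewrite unitmxE H unitr1. Qed.

Lemma S_order x : S x -> exists k, (0 < k)%N /\ x ^+ k = 1.
Proof.
move=> Sx; have Ux := unit_det1 (S_det Sx).
pose u := FinRing.unit _ Ux.
exists #[u]%g; split; first exact: order_gt0.
have := f_equal val (expg_order u); rewrite FinRing.val_unitX /=.
by move=> ->.
Qed.

Lemma S_inv x : S x -> S (x^-1).
Proof.
move=> Sx; have Ux := unit_det1 (S_det Sx).
have [[|k] [// _ Hk]] := S_order Sx.
suff -> : x^-1 = x ^+ (k.*2.+1) by apply: S_pow.
have H : x * x ^+ (k.*2.+1) = 1.
  rewrite -exprS; have -> : (k.*2.+2 = k.+1 + k.+1)%N by rewrite -addnn; lia.
  by rewrite exprD Hk mul1r.
by rewrite -[RHS](mulKr Ux) H mulr1.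
Qed.

Lemma S_one : S 1.
Proof.
have Sx := S_gen Am Am.
by rewrite -(mulrV (unit_det1 (S_det Sx))); apply: S_mul => //; apply: S_inv.
Qed.

Lemma S_cancel X M : S X -> S (X * M) -> S M.
Proof.
move=> SX SXM; have UX := unit_det1 (S_det SX).
by rewrite -(mulKr UX M); apply: S_mul => //; apply: S_inv.
Qed.

Lemma S_U1 : S (m22 1 1 0 1).
Proof.
have UX := unit_det1 (S_det (S_gen Am Am)).
have -> : m22 1 1 0 1 = (gq m * gq m)^-1 * (gq m * gq m.+1).
  have HY : gq m * gq m.+1 = (gq m * gq m) * m22 1 1 0 1.
    rewrite -mulrA; congr (_ * _); rewrite /gq m22_mul -natr1; congr m22; ring.
  by rewrite HY mulKr.
by apply: S_mul; [apply: S_inv; apply: S_gen | apply: S_gen].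
Qed.

Lemma S_L1 : S (m22 1 0 1 1).
Proof.
have UX := unit_det1 (S_det (S_gen Am Am)).
have -> : m22 1 0 1 1 = (gq m.+1 * gq m) * (gq m * gq m)^-1.
  have HY : gq m.+1 * gq m = m22 1 0 1 1 * (gq m * gq m).
    rewrite mulrA; congr (_ * _); rewrite /gq m22_mul -natr1; congr m22; ring.
  by rewrite HY mulrK.
by apply: S_mul; [apply: S_gen | apply: S_inv; apply: S_gen].
Qed.

Lemma S_Un (k : 'Z_q) : S (m22 1 k 0 1).
Proof.
rewrite -[k]natr_Zp; elim: (nat_of_ord k) => [|n IH].
  by rewrite -m22_1; exact: S_one.
have -> : m22 1 (n.+1)%:R 0 1 = m22 1 (n%:R : 'Z_q) 0 1 * m22 1 1 0 1.
  by rewrite m22_mul -natr1; congr m22; ring.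
by apply: S_mul => //; apply: S_U1.
Qed.

Lemma S_Ln (k : 'Z_q) : S (m22 1 0 k 1).
Proof.
rewrite -[k]natr_Zp; elim: (nat_of_ord k) => [|n IH].
  by rewrite -m22_1; exact: S_one.
have -> : m22 1 0 (n.+1)%:R 1 = m22 1 0 (n%:R : 'Z_q) 1 * m22 1 0 1 1.
  by rewrite m22_mul -natr1; congr m22; ring.
by apply: S_mul => //; apply: S_L1.
Qed.

Lemma m22_ex (M : 'M['Z_q]_2) : exists a b c d, M = m22 a b c d.
Proof. by exists (M 0 0), (M 0 1), (M 1 0), (M 1 1); apply: m22_eta. Qed.

Lemma base1 M : \det M = 1 -> M 0 0 = 1 -> S M.
Proof.
have [a [b [c [d ->]]]] := m22_ex M.
rewrite m22_00 det_m22 => Hd Ha; subst a.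
apply: (S_cancel (S_Ln (- c))).
rewrite m22_mul.
have -> : - c * b + 1 * d = 1 by rewrite -[RHS]Hd; ring.
have -> : - c * 1 + 1 * c = 0 by ring.
have -> : 1 * 1 + 0 * c = 1 by ring.
have -> : 1 * b + 0 * d = b by ring.
exact: S_Un.
Qed.

Lemma base_a0 M : \det M = 1 -> M 0 0 = 0 -> S M.
Proof.
move=> Hd Ha; apply: (S_cancel (S_Un (- M 0 1))).
apply: base1; first by rewrite det_mulmx Hd det_m22; ring.
move: Hd Ha; have [a [b [c [d ->]]]] := m22_ex M.
rewrite det_m22 m22_mul !m22_00 => Hd Ha; subst a.
by rewrite mxE /= -[RHS]Hd mulr0 mul0r add0r sub0r mulNr.
Qed.

Lemma base_c0 M : \det M = 1 -> M 1 0 = 0 -> S M.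
Proof.
move=> Hd Hc.
apply: (S_cancel (S_mul (S_Un 1) (S_Ln ((1 - M 0 0) * M 1 1)))).
apply: base1; first by rewrite !det_mulmx Hd !det_m22; ring.
move: Hd Hc; have [a [b [c [d ->]]]] := m22_ex M.
rewrite det_m22 !m22_mul m22_00 m22_10 => Hd Hc; subst c.
have Had : a * d = 1 by rewrite -[RHS]Hd mulr0 subr0.
rewrite !mxE /=.
transitivity (a + (1 - a) * (a * d)); first ring.
rewrite Had; ring.
Qed.

Lemma mulU00 k (M : 'M['Z_q]_2) : (m22 1 k 0 1 * M) 0 0 = M 0 0 + k * M 1 0.
Proof. have [a [b [c [d ->]]]] := m22_ex M; rewrite m22_mul !mxE /=; ring. Qed.
Lemma mulU10 k (M : 'M['Z_q]_2) : (m22 1 k 0 1 * M) 1 0 = M 1 0.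
Proof. have [a [b [c [d ->]]]] := m22_ex M; rewrite m22_mul !mxE /=; ring. Qed.
Lemma mulL10 k (M : 'M['Z_q]_2) : (m22 1 0 k 1 * M) 1 0 = M 1 0 + k * M 0 0.
Proof. have [a [b [c [d ->]]]] := m22_ex M; rewrite m22_mul !mxE /=; ring. Qed.
Lemma mulL00 k (M : 'M['Z_q]_2) : (m22 1 0 k 1 * M) 0 0 = M 0 0.
Proof. have [a [b [c [d ->]]]] := m22_ex M; rewrite m22_mul !mxE /=; ring. Qed.

Lemma valq (n : nat) : (n < q)%N -> nat_of_ord (n%:R : 'Z_q) = n.
Proof. by move=> H; rewrite val_Zp_nat // modn_small. Qed.

Lemma ltq (x : 'Z_q) : (x < q)%N.
Proof. have := ltn_ord x; have := Zp_cast q1; move=> E H; rewrite -[in X in (_ < X)%N]E; exact: H. Qed.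

Lemma main (n : nat) (M : 'M['Z_q]_2) : \det M = 1 -> leq (addn (nat_of_ord (M 0 0)) (nat_of_ord (M 1 0))) n -> S M.
Proof.
elim: n M => [|n IH] M Hd Hn.
  have H0 : nat_of_ord (M 0 0) = 0%N by lia.
  by apply: base_a0 => //; apply: ord_inj; rewrite H0.
have [Ha0|Ha0] := eqVneq (M 0 0) 0; first exact: base_a0.
have [Hc0|Hc0] := eqVneq (M 1 0) 0; first exact: base_c0.
have aq := ltq (M 0 0); have cq := ltq (M 1 0).
set a := nat_of_ord (M 0 0) in Hn aq; set c := nat_of_ord (M 1 0) in Hn cq.
have ha : (0 < a)%N by rewrite lt0n; apply: contra Ha0 => /eqP H; apply/eqP/ord_inj.
have hc : (0 < c)%N by rewrite lt0n; apply: contra Hc0 => /eqP H; apply/eqP/ord_inj.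
have Ea : M 0 0 = a%:R by rewrite natr_Zp.
have Ec : M 1 0 = c%:R by rewrite natr_Zp.
case: (leqP c a) => hca.
- apply: (S_cancel (S_Un (- (a %/ c)%:R))).
  have E : (m22 1 (- (a %/ c)%:R) 0 1 * M) 0 0 = (a %% c)%:R.
    rewrite mulU00 Ea Ec {1}(divn_eq a c) natrD natrM; ring.
  have E2 : (m22 1 (- (a %/ c)%:R) 0 1 * M) 1 0 = c%:R.
    by rewrite mulU10.
  apply: IH; first by rewrite det_mulmx Hd det_m22; ring.
  rewrite E E2 !valq; have := ltn_pmod a hc; lia.
- apply: (S_cancel (S_Ln (- (c %/ a)%:R))).
  have E : (m22 1 0 (- (c %/ a)%:R) 1 * M) 1 0 = (c %% a)%:R.
    rewrite mulL10 Ea Ec {1}(divn_eq c a) natrD natrM; ring.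
  have E2 : (m22 1 0 (- (c %/ a)%:R) 1 * M) 0 0 = a%:R.
    by rewrite mulL00.
  apply: IH; first by rewrite det_mulmx Hd det_m22; ring.
  rewrite E E2 !valq; have := ltn_pmod c ha; lia.
Qed.

End Main.

Theorem lemmaB3 (A : nat -> Prop) (m : nat) :
  (0 < m)%N -> A m -> A m.+1 -> everywhere_strong_approximation A.
Proof.
move=> _ Am Am1 q q1 M; split.
- move=> H; exact: (@S_det A q M H).
- move=> Hd; exact: (@main A m q Am Am1 q1 _ M Hd (leqnn _)).
Qed.
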